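(* For every integer $k\ge1$, $$\frac{B_k}{k!}=n_{(1,\dots,1)},$$ where $(1,\dots,1)$ is the tuple consisting of $k$ entries equal to $1$.
   Context: $B_k$ are the Bernoulli numbers, defined by $\frac{t}{e^t-1}=\sum_{k\ge0}B_k\frac{t^k}{k!}$ (so $B_1=-\tfrac12$). For a tuple $J=(j_1,\dots,j_s)$ of integers $j_i\ge1$, $m_J:=\prod_{i=1}^{s}\frac{1}{j_i+j_{i+1}+\cdots+j_s+1}\cdot\frac{1}{(j_i-1)!}$, and $n_J:=\sum_{J=J_1\|\cdots\|J_l}(-1)^l m_{J_1}\cdots m_{J_l}$, where the sum runs over all ways of writing $J$ as a concatenation $J_1\|\cdots\|J_l$ of $l\ge1$ nonempty tuples. *)

(* Defs.v *)
From mathcomp Require Import all_boot all_order all_algebra.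
Set Implicit Arguments. Unset Strict Implicit. Unset Printing Implicit Defensive.
Import Order.TTheory GRing.Theory Num.Theory.
Local Open Scope ring_scope.

(* Bernoulli numbers (convention B_1 = -1/2), defined by the generating
   function t/(e^t-1) = sum_k B_k t^k/k!, read as an identity of formal power
   series: (sum_{n>=0} t^n/(n+1)!) * (sum_k B_k t^k/k!) = 1, i.e. for all m,
     sum_{j=0}^m B_j/j! * 1/(m-j+1)! = [m == 0].
   Solving this triangular system gives B_0 = 1 and, for m >= 1,
     B_m = - m! * sum_{j<m} B_j / (j! (m-j+1)!).
   bern_list n is the list [B_0; ...; B_n]. *)
Fixpoint bern_list (n : nat) : seq rat :=
  match n with
  | 0 => [:: 1]
  | n'.+1 =>
      let L := bern_list n' in
      rcons L (- (n'.+1)`!%:R *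
                 \sum_(j < n'.+1) (nth 0 L j / ((j`!)%:R * ((n'.+2 - j)`!)%:R)))
  end.

Definition bernoulli (k : nat) : rat := nth 0 (bern_list k) k.

Definition bernoulli_gf_identity (B : nat -> rat) : Prop :=
  forall m : nat,
    \sum_(j < m.+1) (B j / (j`!)%:R) / ((m - j).+1`!)%:R = (m == 0%N)%:R.

Definition mJ (J : seq nat) : rat :=
  \prod_(i < size J)
     (1 / ((sumn (drop i J)).+1)%:R * (1 / ((nth 0 J i).-1`!)%:R)).

(* All ways of writing J as a concatenation J_1 || ... || J_l of nonempty
   tuples (for J = [::] this is the single empty decomposition). *)
Fixpoint decomps (T : Type) (J : seq T) : seq (seq (seq T)) :=
  match J with
  | [::] => [:: [::]]
  | x :: J' =>
      flatten [seq (match D with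
                    | [::] => [:: [:: [:: x]]]
                    | P :: D' => [:: [:: x] :: P :: D'; (x :: P) :: D']
                    end) | D <- decomps J']
  end.

Definition nJ (J : seq nat) : rat :=
  \sum_(D <- decomps J) ((-1) ^+ size D * \prod_(P <- D) mJ P).

(* Main.v *)
Require Import Defs.
From mathcomp Require Import all_boot all_order all_algebra.
From mathcomp Require Import ring.
Import GRing.Theory Num.Theory.
Local Open Scope ring_scope.

Lemma size_bern n : size (bern_list n) = n.+1.
Proof. by elim: n => [|n IH] //=; rewrite size_rcons IH. Qed.

Lemma bern_nth n j : (j <= n)%N -> nth 0 (bern_list n) j = bernoulli j.
Proof.
move=> /subnK <-; rewrite /bernoulli; elim: (n - j)%N => [|d IH] //=.
by rewrite nth_rcons size_bern ltnS leq_addl IH.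
Qed.

Lemma bern_rec m : bernoulli m.+1 / (m.+1)`!%:R =
  - \sum_(j < m.+1) (bernoulli j / (j`!)%:R) / ((m.+1 - j).+1`!)%:R.
Proof.
rewrite {1}/bernoulli /= nth_rcons size_bern ltnn eqxx.
rewrite !mulNr mulrAC divff ?mul1r; last by rewrite pnatr_eq0 -lt0n fact_gt0.
apply: congr1; apply: eq_bigr => j _.
rewrite (@bern_nth m j (ltn_ord j)).
have -> : (m.+2 - j)%N = (m.+1 - j).+1 by rewrite subSn // ltnW.
by rewrite invfM mulrA.
Qed.

Definition phi (J : seq nat) (g : seq nat -> rat) : rat :=
  \sum_(D <- decomps J) ((-1) ^+ size D * g (head [::] D) * \prod_(P <- behead D) mJ P).

Lemma nJ_phi J : nJ J = phi J mJ.
Proof.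
apply: eq_bigr => D _; case: D => [|P D] /=.
  by rewrite big_nil /mJ big_ord0 !mulr1.
by rewrite big_cons mulrA.
Qed.

Lemma phi1 x g : phi [:: x] g = - g [:: x].
Proof. by rewrite /phi /= big_cons big_nil /= big_nil expr1 addr0 mulr1 mulN1r. Qed.

Lemma phi_rec x J g : J <> [::] ->
  phi (x :: J) g = - g [:: x] * phi J mJ + phi J (fun P => g (x :: P)).
Proof.
move=> J0.
have : [::] \notin decomps J.
  case: J J0 => [//|y J] _ /=; apply/negP => /flattenP [s /mapP [D _ ->]].
  by case: D => [|P D]; rewrite !inE.
rewrite /phi /= big_flatten /= big_map mulr_sumr -big_split /=.
elim: (decomps J) => [|D L IH]; first by rewrite !big_nil.
rewrite !inE negb_or => /andP [DN LN]; rewrite !big_cons IH //; congr (_ + _).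
case: D DN => [//|P D] _ /=; rewrite big_cons big_cons big_nil addr0 /= big_cons.
rewrite exprS; ring.
Qed.

Lemma sumn_ones n : sumn (nseq n 1%N) = n.
Proof. by elim: n => //= n ->; rewrite add1n. Qed.

Lemma mJ_ones s : mJ (nseq s 1%N) = 1 / (s.+1`!)%:R.
Proof.
rewrite /mJ size_nseq.
have -> : \prod_(i < s) (1 / (sumn (drop i (nseq s 1%N))).+1%:R *
                         (1 / ((nth 0%N (nseq s 1%N) i).-1)`!%:R))
        = \prod_(i < s) (1 / (s - i).+1%:R :> rat).
  apply: eq_bigr => i _.
  by rewrite drop_nseq nth_nseq ltn_ord /= mulr1 sumn_ones.
elim: s => [|s IH]; first by rewrite big_ord0 divr1.
rewrite big_ord_recl subn0 [in RHS]factS natrM.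
under eq_bigr => i _ do rewrite subSS.
rewrite IH !div1r invfM mulrC //.
Qed.

Definition N k := phi (nseq k 1%N) mJ.

Lemma N0 : N 0 = 1.
Proof. by rewrite /N /phi /= big_cons big_nil /= big_nil /mJ big_ord0 !mulr1 addr0. Qed.

Lemma phi_ones k g : (1 <= k)%N ->
  phi (nseq k 1%N) g = - \sum_(s < k) g (nseq s.+1 1%N) * N (k - s.+1).
Proof.
elim: k g => [//|k IH] g _.
case: k IH => [|k] IH.
  by rewrite phi1 big_ord1 subnn N0 mulr1.
rewrite [nseq _ _]/= phi_rec // -[phi (nseq k.+1 1%N) mJ]/(N k.+1) IH //.
rewrite [in RHS]big_ord_recl opprD mulNr subSS subn0.
rewrite [X in _ - X = _](eq_bigr (fun i : 'I_k.+1 =>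
  g (nseq (lift ord0 i).+1 1%N) * N (k.+2 - (lift ord0 i).+1))) //.
Qed.

Lemma N_rec k : N k.+1 = - \sum_(s < k.+1) 1 / (s.+2`!)%:R * N (k - s).
Proof.
rewrite {1}/N phi_ones //; apply: congr1; apply: eq_bigr => s _.
by rewrite mJ_ones subSS.
Qed.

Lemma b_eq_N k : bernoulli k / (k`!)%:R = N k.
Proof.
elim/ltn_ind: k => [[|m]] IH.
  by rewrite N0 /bernoulli /= divr1.
rewrite bern_rec N_rec (reindex_inj rev_ord_inj) /=.
rewrite [X in - X = _](eq_bigr (fun s : 'I_m.+1 => 1 / (s.+2`!)%:R * N (m - s))) //.
move=> s _; rewrite subSS (IH (m - s)%N); last by rewrite ltnS leq_subr.
have -> : (m.+1 - (m - s) = s.+1)%N.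
  by rewrite subSn ?leq_subr // subKn // -ltnS.
by rewrite mulrC div1r.
Qed.

Theorem mainTheorem8 (k : nat) (hk : (1 <= k)%N) :
  bernoulli k / (k`!)%:R = nJ (nseq k 1%N).
Proof. by rewrite b_eq_N nJ_phi. Qed.
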